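(* Assume the Nested Logit model without outside option described in the context satisfies Assumptions 1 and 2, and let $S \in \mathcal{S}$. Then for every $i \in S$: (I) if $N(i) \subseteq S$, then $\mathsf{BF}(i,S) \le \mathsf{BF}(k,S)$ for all $k \in S$ (in particular $\mathsf{BF}(i,S)$ takes the same value for all $i \in S$ with $N(i) \subseteq S$); (II) if $N(i) \not\subseteq S$, then for every $j \in S \setminus \{i\}$ we have $N(i) = N(j)$ if and only if $\mathsf{BF}(i,S) = \mathsf{BF}(j,S)$. Consequently, with $\mathsf{minBF}(S) = \arg\min_{k \in S} \mathsf{BF}(k,S)$ (the set of items of $S$ attaining the minimum boost factor): (a) if $N(i) \subseteq S$ for some $i \in S$, then $\mathsf{minBF}(S) = \bigcup_{N \in \mathcal{N} : N \subseteq S} N$; otherwise $\mathsf{minBF}(S) \subsetneq N$ for a single nest $N \in \mathcal{N}$ not fully contained in $S$; (b) if $i,j \in S$ and $\mathsf{BF}(i,S) = \mathsf{BF}(j,S) > \min_{k \in S} \mathsf{BF}(k,S)$, then $N(i) = N(j)$; (c) if $i,j \in S$ and $\mathsf{BF}(i,S) \neq \mathsf{BF}(j,S)$, then $N(i) \neq N(j)$.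
   Context: Items: $[n]=\{1,\dots,n\}$ with $n\ge 2$. Experiment design: fix an integer base $b \ge 2$, let $L = \lceil \log_b n \rceil$, fix an injective map $\sigma: [n] \to \{0,\dots,b-1\}^L$ with coordinates $\sigma_\ell(i)$, let $S_{\ell,-d} = \{i \in [n] : \sigma_\ell(i) \neq d\}$ for $\ell \in \{1,\dots,L\}$, $d \in \{0,\dots,b-1\}$, and $\mathcal{S} = \{S_{\ell,-d}\}_{\ell,d}$; the control assortment $[n]$ is also offered. Nested Logit model without outside option: $\mathcal{N}$ is a partition of $[n]$ into nests, $N(i)$ the nest containing $i$; weights $v_i > 0$; parameters $\lambda_N \in [0,1]$, with an extra weight $v_N>0$ when $\lambda_N=0$. $v_N(S) = (\sum_{i \in N \cap S} v_i)^{\lambda_N}$ if $\lambda_N \in (0,1]$, $v_N(S) = v_N \mathbf{1}(N \cap S \neq \emptyset)$ if $\lambda_N = 0$. For $i \in S$, $\phi(i,S) = \frac{v_{N(i)}(S)}{\sum_{N \in \mathcal{N}} v_N(S)} \cdot \frac{v_i}{\sum_{j \in N(i) \cap S} v_j}$ (no outside option, so $\sum_{i\in S}\phi(i,S)=1$). Boost factor: $\mathsf{BF}(i,S) = \phi(i,S)/\phi(i,[n])$ for $S \in \mathcal{S}$, $i \in S$. Multiplier: $\mathsf{Mult}(N,S) = \left(\frac{\sum_{j \in N} v_j}{\sum_{j \in N \cap S} v_j}\right)^{1-\lambda_N}$. Assumption 1: $\lambda_N = 1$ iff $|N| = 1$. Assumption 2: for every $S \in \mathcal{S}$ and distinct nests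 $N \neq N'$ with $\emptyset \neq N \cap S \neq N$ and $\emptyset \neq N' \cap S \neq N'$, $\mathsf{Mult}(N,S) \neq \mathsf{Mult}(N',S)$. *)

(* Defs.v *)
From HB Require Import structures.
From mathcomp Require Import all_boot all_order all_algebra.
From mathcomp Require Import reals exp.
Set Implicit Arguments. Unset Strict Implicit. Unset Printing Implicit Defensive.
Import Order.TTheory GRing.Theory Num.Theory.
Local Open Scope ring_scope.

(* Items are 'I_n (0-based rendering of [n]).  Nests: a partition P of
   [set: 'I_n] (finset's [partition]); N(i) = pblock P i. *)

Section NL.
Variables (R : realType) (n : nat).
Variables (P : {set {set 'I_n}}) (lam vN : {set 'I_n} -> R) (v : 'I_n -> R).

Definition nestw (N S : {set 'I_n}) : R :=
  if lam N == 0 then (if N :&: S != set0 then vN N else 0)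
  else (\sum_(j in N :&: S) v j) `^ (lam N).

Definition phi (i : 'I_n) (S : {set 'I_n}) : R :=
  nestw (pblock P i) S / (\sum_(N in P) nestw N S)
  * (v i / \sum_(j in pblock P i :&: S) v j).

Definition BF (i : 'I_n) (S : {set 'I_n}) : R := phi i S / phi i [set: 'I_n].

Definition Mult (N S : {set 'I_n}) : R :=
  ((\sum_(j in N) v j) / (\sum_(j in N :&: S) v j)) `^ (1 - lam N).

Definition minBF (S : {set 'I_n}) : {set 'I_n} :=
  [set k in S | [forall k' in S, BF k S <= BF k' S]].
End NL.

(* Experiment design: L = ceil(log_b n) = up_log b n, sigma injective,
   S_{l,-d} = {i | sigma_l(i) <> d}, l in 'I_L (0-based), d in 'I_b. *)
Definition Sdesign (n b : nat) (sigma : 'I_n -> {ffun 'I_(up_log b n) -> 'I_b})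
  (l : 'I_(up_log b n)) (d : 'I_b) : {set 'I_n} :=
  [set i | sigma i l != d].

(* Main.v *)
From HB Require Import structures.
From mathcomp Require Import all_boot all_order all_algebra.
From mathcomp Require Import reals exp.
From mathcomp Require Import lra ring.
Require Import Defs.
Set Implicit Arguments. Unset Strict Implicit.
Import Order.TTheory GRing.Theory Num.Theory.
Local Open Scope ring_scope.

Lemma sum_gt0_aux (R : realType) (n : nat) (v : 'I_n -> R) (A : {set 'I_n}) :
  (forall i, 0 < v i) -> A != set0 -> 0 < \sum_(j in A) v j.
Proof.
move=> vpos /set0Pn [x xA]; rewrite (bigD1 x) //=.
have h1 := vpos x.
have h2 : 0 <= \sum_(j in A | j != x) v j by apply: sumr_ge0 => j _; apply: ltW.
lra.
Qed.

Lemma nestw_ge0_aux (R : realType) (n : nat) (P : {set {set 'I_n}})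
  (lam vN : {set 'I_n} -> R) (v : 'I_n -> R) (N S : {set 'I_n}) :
  (forall N, N \in P -> lam N = 0 -> 0 < vN N) -> N \in P ->
  0 <= nestw lam vN v N S.
Proof.
move=> vNpos NP; rewrite /nestw; case: ifP => [/eqP l0|_]; last exact: powR_ge0.
by case: ifP => // _; apply: ltW; apply: vNpos.
Qed.

Lemma nestw_gt0_aux (R : realType) (n : nat) (P : {set {set 'I_n}})
  (lam vN : {set 'I_n} -> R) (v : 'I_n -> R) (N S : {set 'I_n}) :
  (forall i, 0 < v i) ->
  (forall N, N \in P -> lam N = 0 -> 0 < vN N) -> N \in P -> N :&: S != set0 ->
  0 < nestw lam vN v N S.
Proof.
move=> vpos vNpos NP ne; rewrite /nestw; case: ifP => [/eqP l0|_].
  by rewrite ne; apply: vNpos.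
by apply: powR_gt0; exact: sum_gt0_aux vpos ne.
Qed.

Lemma mult_form_aux (R : realType) (n : nat) (P : {set {set 'I_n}})
  (lam vN : {set 'I_n} -> R) (v : 'I_n -> R) (N S : {set 'I_n}) :
  (forall i, 0 < v i) ->
  (forall N, N \in P -> lam N = 0 -> 0 < vN N) -> N \in P -> N :&: S != set0 ->
  nestw lam vN v N S / nestw lam vN v N [set: 'I_n]
    * ((\sum_(j in N) v j) / (\sum_(j in N :&: S) v j)) = Mult lam v N S.
Proof.
move=> vpos vNpos NP ne.
have NT : N :&: [set: 'I_n] != set0.
  by rewrite setIT; apply: contraNneq ne => ->; rewrite set0I.
have Vs := sum_gt0_aux vpos ne.
have V : 0 < \sum_(j in N) v j by move: (sum_gt0_aux vpos NT); rewrite setIT.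
rewrite /nestw /Mult setIT; case: ifP => [/eqP l0|l0].
  have NN : N != set0 by move: NT; rewrite setIT.
  rewrite ne NN l0 subr0 powRr1; last by apply: divr_ge0; apply: ltW.
  have := vNpos N NP l0 => vp.
  by rewrite divff ?mul1r // gt_eqF.
set x := (\sum_(j in N) v j) / (\sum_(j in N :&: S) v j).
have xp : 0 < x by apply: divr_gt0.
have -> : \sum_(j in N) v j = x * \sum_(j in N :&: S) v j.
  by rewrite /x mulrAC -mulrA divff ?mulr1 // gt_eqF.
rewrite powRM ?ltW // powRB; last by apply/implyP => _; rewrite gt_eqF.
rewrite powRr1 ?ltW //.
have h1 : x `^ lam N != 0 by rewrite gt_eqF // powR_gt0.
have h2 : (\sum_(j in N :&: S) v j) `^ lam N != 0 by rewrite gt_eqF // powR_gt0.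
have h3 : \sum_(j in N :&: S) v j != 0 by rewrite gt_eqF.
field. rewrite h1 h2 /=. done.
Qed.

Lemma mult_eq1_aux (R : realType) (n : nat) (lam : {set 'I_n} -> R) (v : 'I_n -> R) (N S : {set 'I_n}) :
  (forall i, 0 < v i) -> N != set0 -> N \subset S -> Mult lam v N S = 1.
Proof.
move=> vpos NN /setIidPl E; rewrite /Mult E divff ?powR1 //.
by rewrite gt_eqF // (sum_gt0_aux vpos).
Qed.

Lemma mult_gt1_aux (R : realType) (n : nat) (P : {set {set 'I_n}})
  (lam : {set 'I_n} -> R) (v : 'I_n -> R) (N S : {set 'I_n}) :
  (forall i, 0 < v i) ->
  (forall N, N \in P -> 0 <= lam N <= 1) ->
  (forall N, N \in P -> (lam N == 1) = (#|N| == 1%N)) ->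
  N \in P -> N :&: S != set0 -> ~~ (N \subset S) -> 1 < Mult lam v N S.
Proof.
move=> vpos l01 A1 NP ne nsub.
have [j jN jS] : exists2 j, j \in N & j \notin S.
  case/subsetPn: nsub => j jN jS; by exists j.
case/set0Pn: (ne) => i; rewrite inE => /andP [iN iS].
have l1 : lam N < 1.
  have /andP [_ h] := l01 N NP; rewrite lt_neqAle h andbT A1 //.
  apply/negP => /cards1P [a Na].
  move: iN jN; rewrite Na !inE => /eqP ia /eqP ja.
  by move: jS; rewrite ja -ia iS.
have Vs := sum_gt0_aux vpos ne.
have V : \sum_(j in N) v j = \sum_(j in N :&: S) v j + \sum_(j in N :\: S) v j.
  rewrite (bigID (mem S)) /=; congr (_ + _); apply: eq_bigl => k; by rewrite !inE andbC.
have Vd : 0 < \sum_(j in N :\: S) v j.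
  apply: (sum_gt0_aux vpos); apply/set0Pn; exists j; by rewrite !inE jN jS.
set x := (\sum_(j in N) v j) / (\sum_(j in N :&: S) v j).
have x1 : 1 < x by rewrite /x ltr_pdivlMr // mul1r V; lra.
rewrite /Mult -/x lt_neqAle; apply/andP; split.
  rewrite eq_sym powR_eq1 negb_or negb_or; apply/and3P; split.
  - by rewrite gt_eqF.
  - by rewrite -leNgt ltW // (lt_trans ltr01).
  - by rewrite subr_eq0 eq_sym lt_eqF.
rewrite -{1}(powRr0 x); apply: ler_powR; first exact: ltW.
lra.
Qed.

Lemma mult_ge1_aux (R : realType) (n : nat) (P : {set {set 'I_n}})
  (lam : {set 'I_n} -> R) (v : 'I_n -> R) (N S : {set 'I_n}) :
  (forall i, 0 < v i) ->
  (forall N, N \in P -> 0 <= lam N <= 1) ->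
  (forall N, N \in P -> (lam N == 1) = (#|N| == 1%N)) ->
  N \in P -> N :&: S != set0 -> 1 <= Mult lam v N S.
Proof.
move=> vpos l01 A1 NP ne.
case: (boolP (N \subset S)) => sub.
  rewrite (mult_eq1_aux lam vpos) //; apply: contraNneq ne => ->; by rewrite set0I.
by apply: ltW; apply: (mult_gt1_aux vpos l01 A1).
Qed.

Lemma BF_form_aux (R : realType) (n : nat) (P : {set {set 'I_n}})
  (lam vN : {set 'I_n} -> R) (v : 'I_n -> R) (S : {set 'I_n}) i :
  (forall i, 0 < v i) ->
  (forall N, N \in P -> lam N = 0 -> 0 < vN N) ->
  cover P = [set: 'I_n] -> i \in S ->
  BF P lam vN v i S =
   (\sum_(N in P) nestw lam vN v N [set: 'I_n]) / (\sum_(N in P) nestw lam vN v N S)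
   * Mult lam v (pblock P i) S.
Proof.
move=> vpos vNpos covP iS.
have NP : pblock P i \in P by apply: pblock_mem; rewrite covP inE.
have iN : i \in pblock P i by rewrite mem_pblock covP inE.
have neS : pblock P i :&: S != set0 by apply/set0Pn; exists i; rewrite inE iN iS.
have neT : pblock P i :&: [set: 'I_n] != set0 by apply/set0Pn; exists i; rewrite !inE iN.
have Zgt (X : {set 'I_n}) : pblock P i :&: X != set0 -> 0 < \sum_(N in P) nestw lam vN v N X.
  move=> neX; rewrite (bigD1 (pblock P i)) //=.
  have h1 := nestw_gt0_aux vpos vNpos NP neX.
  have h2 : 0 <= \sum_(N in P | N != pblock P i) nestw lam vN v N X.
    by apply: sumr_ge0 => N /andP [NP' _]; apply: (nestw_ge0_aux _ _ vNpos).
  lra.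
rewrite -(mult_form_aux vpos vNpos NP neS).
have hS := Zgt _ neS; have hT := Zgt _ neT.
have a1 := nestw_gt0_aux vpos vNpos NP neS.
have a2 := nestw_gt0_aux vpos vNpos NP neT.
have s1 := sum_gt0_aux vpos neS.
have s2 := sum_gt0_aux vpos neT.
move: s2; rewrite setIT => s2.
have vi := vpos i.
rewrite /BF /phi setIT.
field.
rewrite !gt_eqF //.
Qed.

Unset Implicit Arguments. Set Strict Implicit.

Theorem proposition4p7 (R : realType) (n b : nat)
  (sigma : 'I_n -> {ffun 'I_(up_log b n) -> 'I_b})
  (P : {set {set 'I_n}}) (lam vN : {set 'I_n} -> R) (v : 'I_n -> R)
  (l0 : 'I_(up_log b n)) (d0 : 'I_b) :
  (2 <= n)%N -> (2 <= b)%N -> injective sigma ->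
  partition P [set: 'I_n] ->
  (forall i, 0 < v i) ->
  (forall N, N \in P -> 0 <= lam N <= 1) ->
  (forall N, N \in P -> lam N = 0 -> 0 < vN N) ->
  (* Assumption 1 *)
  (forall N, N \in P -> (lam N == 1) = (#|N| == 1%N)) ->
  (* Assumption 2 *)
  (forall (l : 'I_(up_log b n)) (d : 'I_b) N N',
      let S := Sdesign sigma l d in
      N \in P -> N' \in P -> N != N' ->
      N :&: S != set0 -> N :&: S != N ->
      N' :&: S != set0 -> N' :&: S != N' ->
      Mult lam v N S != Mult lam v N' S) ->
  let S := Sdesign sigma l0 d0 in
  let BF' := BF P lam vN v in
  let Nst := pblock P in
  [/\ (* (I) *)
      (forall i, i \in S -> Nst i \subset S ->
         forall k, k \in S -> BF' i S <= BF' k S),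
      (* (II) *)
      (forall i, i \in S -> ~~ (Nst i \subset S) ->
         forall j, j \in S -> j != i -> (Nst i = Nst j <-> BF' i S = BF' j S)),
      (* (a) *)
      ((exists2 i, i \in S & Nst i \subset S) ->
         minBF P lam vN v S = \bigcup_(N in P | N \subset S) N)
      /\ ((~ exists2 i, i \in S & Nst i \subset S) ->
         exists N, [/\ N \in P, ~~ (N \subset S) & minBF P lam vN v S \proper N]),
      (* (b) *)
      (forall i j, i \in S -> j \in S -> BF' i S = BF' j S ->
         (exists2 k, k \in S & BF' k S < BF' i S) -> Nst i = Nst j)
    & (* (c) *)
      (forall i j, i \in S -> j \in S -> BF' i S != BF' j S -> Nst i != Nst j)].
Proof.
move=> n2 b2 injs partP vpos l01 vNpos A1 A2 S BF' Nst.
have A2S : forall N N', N \in P -> N' \in P -> N != N' ->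
      N :&: S != set0 -> N :&: S != N ->
      N' :&: S != set0 -> N' :&: S != N' ->
      Mult lam v N S != Mult lam v N' S by exact: A2 l0 d0.
clearbody S; subst BF' Nst; clear A2.
case/and3P: partP => /eqP covP triv nz0.
have NP i : pblock P i \in P by apply: pblock_mem; rewrite covP inE.
have iN i : i \in pblock P i by rewrite mem_pblock covP inE.
have neS i : i \in S -> pblock P i :&: S != set0.
  by move=> iS; apply/set0Pn; exists i; rewrite inE iN iS.
set C := (\sum_(N in P) nestw lam vN v N [set: 'I_n]) / (\sum_(N in P) nestw lam vN v N S).
have BFf i : i \in S -> BF P lam vN v i S = C * Mult lam v (pblock P i) S.
  by move=> iS; rewrite (BF_form_aux vpos vNpos covP iS).
have Cpos i : i \in S -> 0 < C.
  move=> iS; rewrite /C; apply: divr_gt0.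
  - rewrite (bigD1 (pblock P i)) //=.
    have h1 : 0 < nestw lam vN v (pblock P i) [set: 'I_n].
      apply: (nestw_gt0_aux vpos vNpos (NP i)); apply/set0Pn; exists i; by rewrite !inE iN.
    have h2 : 0 <= \sum_(N in P | N != pblock P i) nestw lam vN v N [set: 'I_n].
      by apply: sumr_ge0 => N /andP [NP' _]; apply: (nestw_ge0_aux _ _ vNpos).
    lra.
  - rewrite (bigD1 (pblock P i)) //=.
    have h1 := nestw_gt0_aux vpos vNpos (NP i) (neS i iS).
    have h2 : 0 <= \sum_(N in P | N != pblock P i) nestw lam vN v N S.
      by apply: sumr_ge0 => N /andP [NP' _]; apply: (nestw_ge0_aux _ _ vNpos).
    lra.
have Meq1 i : pblock P i \subset S -> Mult lam v (pblock P i) S = 1.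
  move=> sub; apply: (mult_eq1_aux lam vpos) => //.
  by apply/set0Pn; exists i.
have Mgt1 i : i \in S -> ~~ (pblock P i \subset S) -> 1 < Mult lam v (pblock P i) S.
  by move=> iS ns; apply: (mult_gt1_aux vpos l01 A1 (NP i) (neS i iS) ns).
have Mge1 i : i \in S -> 1 <= Mult lam v (pblock P i) S.
  by move=> iS; apply: (mult_ge1_aux vpos l01 A1 (NP i) (neS i iS)).
have PI : forall i, i \in S -> pblock P i \subset S ->
         forall k, k \in S -> BF P lam vN v i S <= BF P lam vN v k S.
  move=> i iS sub k kS; rewrite (BFf i iS) (BFf k kS) (Meq1 i sub) mulr1.
  have := Mge1 k kS; have := Cpos i iS; nra.
have PII : forall i, i \in S -> ~~ (pblock P i \subset S) ->
         forall j, j \in S -> j != i ->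
         (pblock P i = pblock P j <-> BF P lam vN v i S = BF P lam vN v j S).
  move=> i iS ns j jS ji; split.
    by move=> e; rewrite (BFf i iS) (BFf j jS) e.
  rewrite (BFf i iS) (BFf j jS) => /mulfI; rewrite gt_eqF ?(Cpos i iS) // => /(_ isT) Me.
  case: (eqVneq (pblock P i) (pblock P j)) => // ne; exfalso.
  have Mi := Mgt1 i iS ns.
  case: (boolP (pblock P j \subset S)) => sj.
    by move: Mi; rewrite Me (Meq1 j sj) ltxx.
  have h1 : pblock P i :&: S != pblock P i.
    by apply: contra ns => /eqP <-; apply: subsetIr.
  have h2 : pblock P j :&: S != pblock P j.
    by apply: contra sj => /eqP <-; apply: subsetIr.
  by move: (A2S _ _ (NP i) (NP j) ne (neS i iS) h1 (neS j jS) h2); rewrite Me eqxx.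
split => //.
- split.
  + case=> i0 i0S si0.
    apply/setP => k; rewrite /minBF inE; apply/andP/bigcupP.
    * case=> kS /forall_inP H; exists (pblock P k); last exact: iN.
      rewrite NP /=; apply/negPn/negP => ns.
      have := H i0 i0S; rewrite (BFf k kS) (BFf i0 i0S) (Meq1 i0 si0) mulr1.
      have := Mgt1 k kS ns; have := Cpos k kS; nra.
    * case=> N /andP [NP' NS] kN.
      have e : pblock P k = N by apply: def_pblock.
      have kS : k \in S by apply: (subsetP NS).
      split => //; apply/forall_inP => k' k'S; apply: PI => //; by rewrite e.
  + move=> nE.
    have x0 : 'I_n by exists 0%N; apply: leq_trans n2.
    case: (eqVneq (minBF P lam vN v S) set0) => [->|mne].
      exists (pblock P x0); split => //.
      * apply/negP => sub; apply: nE; exists x0 => //; exact: (subsetP sub x0 (iN x0)).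
      * by rewrite proper0; apply/set0Pn; exists x0.
    case/set0Pn: mne => k; rewrite /minBF inE => /andP [kS /forall_inP Hk].
    have ns : ~~ (pblock P k \subset S) by apply/negP => sub; apply: nE; exists k.
    exists (pblock P k); split => //.
    have sub : minBF P lam vN v S \subset pblock P k.
      apply/subsetP => k'; rewrite /minBF inE => /andP [k'S /forall_inP Hk'].
      case: (eqVneq k' k) => [->|ne]; first exact: iN.
      have eq : BF P lam vN v k S = BF P lam vN v k' S.
        by apply/eqP; rewrite eq_le Hk // Hk'.
      by move/(PII k kS ns k' k'S ne): eq => ->; apply: iN.
    rewrite properEneq sub andbT; apply: contra ns => /eqP <-.
    by apply/subsetP => x; rewrite /minBF inE => /andP [].
- move=> i j iS jS e [k kS lt].
  have ns : ~~ (pblock P i \subset S).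
    by apply/negP => sub; move: (PI i iS sub k kS); rewrite leNgt lt.
  case: (eqVneq j i) => [->|ji] //.
  by apply/(PII i iS ns j jS ji).
- move=> i j iS jS; apply: contra_neq => e.
  by rewrite (BFf i iS) (BFf j jS) e.
Qed.
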